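(* $\mathfrak{b}_{\mathrm{game}}^{\mathrm{I}} = \mathfrak{b}$, where $\mathfrak{b}$ is the bounding number.
   Context: For $x,y\in\omega^\omega$, $x\le^* y$ means $x(n)\le y(n)$ for all but finitely many $n$. $\mathfrak{b}$ is the least size of a family $\mathcal{A}\subseteq\omega^\omega$ such that no single $x\in\omega^\omega$ satisfies $y\le^* x$ for all $y\in\mathcal{A}$. For $\mathcal{A}\subseteq\omega^\omega$, the bounding game with respect to $\mathcal{A}$ is the infinite two-player game in which, at round $k$, Player I plays $n_k\in\omega$ and then Player II plays $i_k\in\{0,1\}$. Player II wins iff $i_k=1$ for infinitely many $k$ and there is $g\in\mathcal{A}$ with $\{k\in\omega: i_k=1\}=\{k\in\omega: n_k<g(k)\}$. $\mathfrak{b}_{\mathrm{game}}^{\mathrm{I}}$ is the least $|\mathcal{A}|$ such that Player I has no winning strategy in the bounding game with respect to $\mathcal{A}$. *)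

(* Defs.v *)
From mathcomp Require Import all_boot.
From mathcomp Require Import boolp classical_sets cardinality.
Set Implicit Arguments. Unset Strict Implicit. Unset Printing Implicit Defensive.
Local Open Scope classical_set_scope.

Definition le_star (x y : nat -> nat) : Prop :=
  exists N, forall n, N <= n -> x n <= y n.

Definition unbounded (A : set (nat -> nat)) : Prop :=
  ~ (exists x : nat -> nat, forall y, A y -> le_star y x).

(* A strategy for Player I maps the history of the play so far
   [(n_0,i_0); ...; (n_{k-1},i_{k-1})] to Player I's next move n_k. *)
Definition strategyI := seq (nat * bool) -> nat.

Fixpoint history (sigma : strategyI) (i : nat -> bool) (k : nat)
  : seq (nat * bool) :=
  match k with
  | 0 => [::]
  | k'.+1 => rcons (history sigma i k') (sigma (history sigma i k'), i k')
  end.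

Definition movesI (sigma : strategyI) (i : nat -> bool) (k : nat) : nat :=
  sigma (history sigma i k).

Definition II_wins (A : set (nat -> nat)) (n : nat -> nat) (i : nat -> bool)
  : Prop :=
  (forall m, exists k, m <= k /\ i k = true) /\
  (exists g, A g /\ forall k, i k = (n k < g k)).

Definition winningI (A : set (nat -> nat)) (sigma : strategyI) : Prop :=
  forall i : nat -> bool, ~ II_wins A (movesI sigma i) i.

Definition noI_win (A : set (nat -> nat)) : Prop :=
  ~ (exists sigma, winningI A sigma).

(* Main.v *)
Require Import Defs.
From mathcomp Require Import all_boot.
From mathcomp Require Import boolp classical_sets cardinality.
From Stdlib Require Import Classical.
Local Open Scope classical_set_scope.
Local Open Scope card_scope.

Fixpoint allH (sigma : strategyI) (k : nat) : seq (seq (nat * bool)) :=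
  match k with
  | 0 => [:: [::]]
  | k'.+1 => flatten [seq [:: rcons h (sigma h, false); rcons h (sigma h, true)]
                     | h <- allH sigma k']
  end.

Definition fbound (sigma : strategyI) (k : nat) : nat :=
  \max_(h <- allH sigma k) sigma h.

Lemma history_in sigma i k : history sigma i k \in allH sigma k.
Proof.
elim: k => [|k IH] /=; first by rewrite inE.
apply/flattenP; exists [:: rcons (history sigma i k) (sigma (history sigma i k), false);
                        rcons (history sigma i k) (sigma (history sigma i k), true)].
  by apply/mapP; exists (history sigma i k).
by case: (i k); rewrite !inE eqxx ?orbT.
Qed.

Lemma moves_le sigma i k : movesI sigma i k <= fbound sigma k.
Proof.
rewrite /movesI /fbound.
exact: (@leq_bigmax_seq _ _ xpredT sigma _ (history_in sigma i k)).
Qed.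

Fixpoint hseq (sigma : strategyI) (g : nat -> nat) (k : nat) : seq (nat * bool) :=
  match k with
  | 0 => [::]
  | k'.+1 => rcons (hseq sigma g k') (sigma (hseq sigma g k'), sigma (hseq sigma g k') < g k')
  end.

Lemma hist_hseq sigma g k :
  history sigma (fun j => sigma (hseq sigma g j) < g j) k = hseq sigma g k.
Proof. by elim: k => [|k IH] //=; rewrite IH. Qed.

Lemma size_hist sigma i k : size (history sigma i k) = k.
Proof. by elim: k => [|k IH] //=; rewrite size_rcons IH. Qed.

Theorem mainTheorem1 :
  (forall A : set (nat -> nat), unbounded A ->
     exists B : set (nat -> nat), noI_win B /\ (B #<= A)) /\
  (forall B : set (nat -> nat), noI_win B ->
     exists A : set (nat -> nat), unbounded A /\ (A #<= B)).
Proof.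
split.
- move=> A HA; exists A; split; last exact: card_lexx.
  move=> [sigma Hs].
  have [g [Ag Hg]] : exists g, A g /\ forall N, exists n, N <= n /\ fbound sigma n < g n.
    apply: NNPP => Hn; apply: HA; exists (fbound sigma) => y Ay.
    apply: NNPP => Hy; apply: Hn; exists y; split => // N.
    apply: NNPP => HN; apply: Hy; exists N => n Nn.
    rewrite leqNgt; apply/negP => H; apply: HN; by exists n.
  pose i := fun j => sigma (hseq sigma g j) < g j.
  apply: (Hs i); split.
    move=> m; have [n [mn Hn]] := Hg m; exists n; split => //.
    rewrite /i -(hist_hseq sigma g n) -/i.
    exact: (leq_ltn_trans (moves_le sigma i n) Hn).
  exists g; split => // k.
  by rewrite /movesI hist_hseq.
- move=> B HB; exists B; split; last exact: card_lexx.
  move=> [x Hx]; apply: HB; exists (fun h => x (size h)) => i [Hinf [g [Bg Hg]]].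
  have [N HN] := Hx g Bg.
  have [k [Nk Hk]] := Hinf N.
  move: Hk; rewrite Hg /movesI size_hist.
  by rewrite ltnNge HN.
Qed.
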